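(* The map $G$ is strongly transitive on $(\mathcal{X},d)$: for all $x,y\in\mathcal{X}$ and every $r>0$ there exist $z\in\mathcal{X}$ with $d(z,x)\le r$ and $n\in\mathbb{N}^*$ such that $G^n(z)=y$.
   Context: Fix an integer $\mathsf{N}\ge 1$ and write $\llbracket a;b\rrbracket=\{a,a+1,\dots,b\}$. Let $f:\mathbb{Z}/4\mathbb{Z}\to\mathbb{Z}/4\mathbb{Z}$, $f(x)=x+1 \pmod 4$, with $f^{-1}(x)=x-1\pmod 4$ and $f^0=\mathrm{id}$. Let $\mathrm{sign}(x)=1$ if $x>0$, $0$ if $x=0$, $-1$ if $x<0$. For $k\in\llbracket -\mathsf{N};\mathsf{N}\rrbracket$ define $f_k:(\mathbb{Z}/4\mathbb{Z})^{\mathsf{N}}\to(\mathbb{Z}/4\mathbb{Z})^{\mathsf{N}}$ by $f_k(C_1,\dots,C_{\mathsf{N}})=(C_1,\dots,C_{|k|-1},f^{\mathrm{sign}(k)}(C_{|k|}),\dots,f^{\mathrm{sign}(k)}(C_{\mathsf{N}}))$ (so $f_0$ is the identity). Folding sequences are $F=(F^j)_{j\in\mathbb{N}}\in\llbracket -\mathsf{N};\mathsf{N}\rrbracket^{\mathbb{N}}$; let $i(F)=F^0$ and let $\sigma$ be the shift, $\sigma((F^j)_{j})=(F^{j+1})_{j}$. A finite sequence $(k_1,\dots,k_n)$ is identified with $(k_1,\dots,k_n,0,0,\dots)$. On $\check{\mathcal{X}}=(\mathbb{Z}/4\mathbb{Z})^{\mathsf{N}}\times\llbracket -\mathsf{N};\mathsf{N}\rrbracket^{\mathbb{N}}$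 define $G((C,F))=(f_{i(F)}(C),\sigma(F))$. SAW requirement: for $C\in(\mathbb{Z}/4\mathbb{Z})^{\mathsf{N}}$ let $p(C)=(X_0,\dots,X_{\mathsf{N}})\in(\mathbb{Z}^2)^{\mathsf{N}+1}$ with $X_0=(0,0)$ and $X_i=X_{i-1}+v(C_i)$, where $v(0)=(1,0)$, $v(1)=(0,-1)$, $v(2)=(-1,0)$, $v(3)=(0,1)$. $C$ satisfies the SAW requirement iff the points $X_0,\dots,X_{\mathsf{N}}$ are pairwise distinct. Let $\mathfrak{C}_{\mathsf{N}}$ be the set of $C\in(\mathbb{Z}/4\mathbb{Z})^{\mathsf{N}}$ for which there exist $n\ge1$ and $k_1,\dots,k_n\in\llbracket -\mathsf{N};\mathsf{N}\rrbracket$ such that $C$ is the first component of $G^n(((0,\dots,0),(k_1,\dots,k_n)))$ and, for every $i\le n$, the first component of $G^i(((0,\dots,0),(k_1,\dots,k_n)))$ satisfies the SAW requirement. Let $\mathcal{X}=\mathfrak{C}_{\mathsf{N}}\times\llbracket -\mathsf{N};\mathsf{N}\rrbracket^{\mathbb{N}}$ with metric $d((C,F),(\check C,\check F))=d_C(C,\check C)+d_F(F,\check F)$, where $d_C(C,\check C)=\sum_{k=1}^{\mathsf{N}}\delta(C_k,\check C_k)2^{\mathsf{N}-k}$ ($\delta(a,b)=0$ if $a=b$, $1$ otherwise) and $d_F(F,\check F)=\frac{9}{2\mathsf{N}}\sum_{k=0}^{\infty}\frac{|F^k-\check F^k|}{10^{k+1}}$. The paper regards $G$ as a self-map of $\mathcal{X}$.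 *)

(* Defs.v *)
From HB Require Import structures.
From mathcomp Require Import all_boot all_order all_algebra.
From mathcomp Require Import all_classical all_reals all_analysis.
From Stdlib Require Rdefinitions.
From mathcomp Require Import Rstruct Rstruct_topology.
Notation R := Rdefinitions.R.
Set Implicit Arguments. Unset Strict Implicit. Unset Printing Implicit Defensive.
Import Order.TTheory GRing.Theory Num.Theory.
Local Open Scope ring_scope.

(* Z/4Z is represented by 'I_4; f = ordS (x+1 mod 4), f^{-1} = ord_pred. *)
Definition fpow_sign (k : int) (x : 'I_4) : 'I_4 :=
  if 0 < k then ordS x else if k < 0 then ord_pred x else x.

(* configurations C = (C_1,...,C_N) : index i : 'I_N stands for C_{i+1} *)
Definition config (N : nat) := {ffun 'I_N -> 'I_4}.

(* f_k : modifies C_{|k|},...,C_N (all entries if k = 0, by the identity) *)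
Definition fk (N : nat) (k : int) (C : config N) : config N :=
  [ffun i : 'I_N => if (`|k|%N <= i.+1)%N then fpow_sign k (C i) else C i].

Definition fold_seq := nat -> int.

(* finite sequence (k_1,...,k_n) identified with (k_1,...,k_n,0,0,...) *)
Definition fseq (ks : seq int) : fold_seq := fun j => nth 0 ks j.

Definition state (N : nat) := (config N * fold_seq)%type.

Definition G (N : nat) (x : state N) : state N :=
  (fk (x.2 0%N) x.1, fun j => x.2 j.+1).

Definition vx (c : 'I_4) : int :=
  match val c with 0%N => 1 | 2%N => -1 | _ => 0 end.
Definition vy (c : 'I_4) : int :=
  match val c with 1%N => -1 | 3%N => 1 | _ => 0 end.

Definition pos (N : nat) (C : config N) (i : 'I_N.+1) : int * int :=
  (\sum_(j : 'I_N | (j < i)%N) vx (C j), \sum_(j : 'I_N | (j < i)%N) vy (C j)).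

Definition SAW (N : nat) (C : config N) : Prop :=
  forall i j : 'I_N.+1, pos C i = pos C j -> i = j.

Definition zero_config (N : nat) : config N := [ffun => ord0].

Definition valid_index (N : nat) (k : int) : Prop := (`|k|%N <= N)%N.

Definition frakC (N : nat) (C : config N) : Prop :=
  exists ks : seq int,
    (1 <= size ks)%N /\ (forall k, k \in ks -> valid_index N k) /\
    C = (iter (size ks) (@G N) (zero_config N, fseq ks)).1 /\
    (forall i, (1 <= i <= size ks)%N ->
        SAW (iter i (@G N) (zero_config N, fseq ks)).1).

Definition inX (N : nat) (x : state N) : Prop :=
  frakC x.1 /\ forall j, valid_index N (x.2 j).

Definition d_C (N : nat) (C C' : config N) : R :=
  \sum_(i : 'I_N) ((C i != C' i)%:R * 2 ^+ (N - i.+1)).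

Definition d_F (N : nat) (F F' : fold_seq) : R :=
  9 / (2 * N%:R) *
  limn (series (fun k : nat => `|(F k - F' k)%:~R : R| / 10 ^+ k.+1)).

Definition dist (N : nat) (x y : state N) : R :=
  d_C x.1 y.1 + d_F N x.2 y.2.

(* Main.v *)
Require Import Defs.
From HB Require Import structures.
From mathcomp Require Import all_boot all_order all_algebra.
From mathcomp Require Import all_classical all_reals all_analysis.
From mathcomp Require Import Rstruct Rstruct_topology.
Import Order.TTheory GRing.Theory Num.Theory.
Set Implicit Arguments. Unset Strict Implicit.
Local Open Scope ring_scope.

Lemma lim_series_le (u : R ^nat) (M : R) :
  (forall n, 0 <= u n) -> (forall n, series u n <= M) -> limn (series u) <= M.
Proof.
move=> u0 uM.
have cv : cvgn (series u).
  apply: nondecreasing_is_cvgn; first exact: nondecreasing_series.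
  by exists M => _ [n _ <-].
apply: limr_le => //; by near=> n.
Unshelve. all: by end_near. Qed.

Lemma iter_ordS (u v : 'I_4) : exists a, iter a (@ordS 4) u = v.
Proof.
case: u => [[|[|[|[|u]]]] Hu] //; case: v => [[|[|[|[|v]]]] Hv] //.
all: first [ by exists 0%N; apply/val_inj | by exists 1%N; apply/val_inj | by exists 2%N; apply/val_inj | by exists 3%N; apply/val_inj | idtac ].
Qed.

Definition fkl (N : nat) (C : config N) (ks : seq int) : config N :=
  foldl (fun C k => fk k C) C ks.

Lemma iterG (N : nat) n (C : config N) (F : fold_seq) :
  iter n (@G N) (C, F) = (fkl C (map F (iota 0 n)), fun j => F (n + j)%N).
Proof.
elim: n C F => [|n IH] C F.
  by congr pair; apply: boolp.funext => j.
rewrite iterSr IH /G /=; congr pair.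
have -> : iota 1 n = map (addn 1) (iota 0 n) by rewrite -iotaDl.
by rewrite -map_comp.
Qed.

Lemma fkl_nseq (N : nat) (C : config N) a p (j : 'I_N) :
  fkl C (nseq a (Posz p.+1)) j = if (p <= j)%N then iter a (@ordS 4) (C j) else C j.
Proof.
elim: a C => [|a IH] C /=; first by case: ifP.
rewrite IH /fk ffunE /= ltnS /fpow_sign /=.
by case: (p <= j)%N => //; exact: (esym (iterSr _ _ _)).
Qed.

Lemma reach (N : nat) (C D : config N) : exists ks : seq int,
  (forall k, k \in ks -> valid_index N k) /\ fkl C ks = D.
Proof.
suff H : forall p, (p <= N)%N -> exists ks : seq int,
  (forall k, k \in ks -> valid_index N k) /\
  forall j : 'I_N, (j < p)%N -> fkl C ks j = D j.
  have [ks [v e]] := H N (leqnn N); exists ks; split => //.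
  by apply/ffunP => j; rewrite e.
elim => [|p IH] hp; first by exists [::].
have [ks [v e]] := IH (ltnW hp).
set C' := fkl C ks.
have [a ea] := iter_ordS (C' (Ordinal hp)) (D (Ordinal hp)).
exists (ks ++ nseq a (Posz p.+1)); split.
  move=> k; rewrite mem_cat => /orP [/v //|/nseqP [-> _]].
  by rewrite /valid_index.
move=> j hj; rewrite /fkl foldl_cat -/(fkl C ks) -/C' fkl_nseq.
case: ifP => hpj.
  have -> : j = Ordinal hp by apply/val_inj => /=; apply/eqP; rewrite eqn_leq hpj -ltnS hj.
  exact: ea.
by rewrite e // ltnNge hpj.
Qed.
From mathcomp Require Import ring lra.

Lemma dF_bound (N : nat) (hN : (1 <= N)%N) (F F' : fold_seq) m :
  (forall j, valid_index N (F j)) -> (forall j, valid_index N (F' j)) ->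
  (forall j, (j < m)%N -> F j = F' j) -> d_F N F F' <= 9 / 2 ^+ m.
Proof.
move=> vF vF' eF.
set c : R := 2 * N%:R.
have c0 : 0 < c by rewrite /c mulr_gt0 // ltr0n.
set u := fun k : nat => `|(F k - F' k)%:~R : R| / 10 ^+ k.+1.
have u0 : forall k, 0 <= u k by move=> k; rewrite /u divr_ge0 // exprn_ge0.
have uk : forall k, u k <= if (k < m)%N then 0 else c / 2 ^+ k.+1.
  move=> k; case: ifP => hk.
    by rewrite /u eF // subrr mulr0z normr0 mul0r.
  have h1 : `|(F k - F' k)%:~R : R| <= c.
    have hi : (`|F k - F' k| <= (2 * N)%N%:Z)%R.
      apply: le_trans (ler_normB _ _) _.
      rewrite mul2n -addnn PoszD lerD // -abszE lez_nat; [exact: vF | exact: vF'].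
    rewrite -intr_norm /c (le_trans (y := ((2 * N)%N%:Z)%:~R)) //; first by rewrite ler_int.
    by rewrite -pmulrn natrM.
  rewrite /u (le_trans (ler_wpM2r _ h1)) ?invr_ge0 ?exprn_ge0 //.
  rewrite ler_wpM2l ?(ltW c0) // lef_pV2 ?posrE ?exprn_gt0 //.
  by rewrite ler_pXn2r ?nnegrE // ler_nat.
have S : forall n, series u n <= c / 2 ^+ m - c / 2 ^+ (maxn n m).
  elim => [|n IH].
    by rewrite max0n subrr /series /= big_geq.
  rewrite seriesSr; have := uk n; case: ltnP => hn un.
    have e1 : maxn n.+1 m = m by apply/maxn_idPr.
    have e2 : maxn n m = m by apply/maxn_idPr; exact: ltnW.
    by rewrite e1; rewrite e2 in IH; rewrite -[X in _ <= X]addr0 lerD.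
  have e1 : maxn n.+1 m = n.+1 by apply/maxn_idPl; exact: ltnW.
  have e2 : maxn n m = n by apply/maxn_idPl.
  rewrite e1; rewrite e2 in IH.
  have e : c / 2 ^+ n = c / 2 ^+ n.+1 + c / 2 ^+ n.+1.
    rewrite exprS; field; by rewrite expf_neq0.
  move: IH; rewrite e; lra.
have L : limn (series u) <= c / 2 ^+ m.
  apply: lim_series_le => // n; apply: le_trans (S n) _.
  by rewrite lerBlDr lerDl divr_ge0 ?exprn_ge0 // ltW.
rewrite /d_F -/u; apply: le_trans (ler_wpM2l _ L) _.
  by rewrite divr_ge0 // mulr_ge0 // ler0n.
rewrite le_eqVlt; apply/orP; left; apply/eqP; rewrite /c.
have N0 : (N%:R : R) != 0 by rewrite pnatr_eq0 -lt0n.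
by field; rewrite N0 expf_neq0.
Qed.
From mathcomp Require Import zify.

Theorem mainTheorem4 (N : nat) (hN : (1 <= N)%N) (x y : state N)
    (hx : inX x) (hy : inX y) (r : R) (hr : 0 < r) :
  exists z : state N, inX z /\ dist z x <= r /\
    exists n : nat, (0 < n)%N /\ iter n (@G N) z = y.
Proof.
case: x hx => C1 F1 [hC1 vF1]; case: y hy => C2 F2 [hC2 vF2] /=.
have [m [m0 hm]] : exists m, (0 < m)%N /\ 9 / 2 ^+ m <= r.
  have h9 : 0 <= 9 / r by rewrite divr_ge0 // ltW.
  have hb := archi_boundP h9.
  exists (Num.bound (9 / r)).+1; split => //.
  have h2 : 9 / r <= 2 ^+ (Num.bound (9 / r)).+1.
    apply: le_trans (ltW hb) _.
    rewrite -natrX ler_nat; apply: (leq_trans (ltnW (ltn_expl _ (ltnSn 1)))).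
    by rewrite expnS leq_pmull.
  rewrite ler_pdivrMr ?exprn_gt0 // mulrC -ler_pdivrMr //.
set C' := fkl C1 (map F1 (iota 0 m)).
have [ks [vks eks]] := reach C' C2.
set s := size ks.
pose Fz : fold_seq := fun j => if (j < m)%N then F1 j
  else if (j < m + s)%N then nth 0 ks (j - m)%N else F2 (j - (m + s))%N.
have vFz : forall j, valid_index N (Fz j).
  move=> j; rewrite /Fz; case: ifP => h1; first exact: vF1.
  case: ifP => h2; last exact: vF2.
  apply: vks; apply: mem_nth; rewrite ltn_subLR //; lia.
exists (C1, Fz); split; first by split.
split.
  rewrite /dist /= /d_C big1 ?add0r => [|i _]; last by rewrite eqxx mul0r.
  apply: le_trans (dF_bound hN vFz vF1 _) hm.
  by move=> j hj; rewrite /Fz hj.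
exists (m + s)%N; split; first by rewrite addn_gt0 m0.
rewrite iterG; congr pair; last first.
  apply: boolp.funext => j; rewrite /Fz.
  case: ifP => h1; first lia.
  case: ifP => h2; first lia.
  by rewrite addKn.
rewrite iotaD map_cat /fkl foldl_cat add0n.
have -> : [seq Fz i | i <- iota 0 m] = [seq F1 i | i <- iota 0 m].
  apply/eq_in_map => i; rewrite mem_iota add0n => hi.
  by move: hi => /andP [_ hi]; rewrite /Fz hi.
have -> : [seq Fz i | i <- iota m s] = ks.
  apply: (@eq_from_nth _ 0); first by rewrite size_map size_iota.
  move=> i; rewrite size_map size_iota => hi.
  rewrite (nth_map 0) ?size_iota // nth_iota // /Fz.
  case: ifP => h1; first lia.
  case: ifP => h2; last lia.
  by rewrite addKn.
exact: eks.
Qed.
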